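(* Let $S_f=\{f_i\ge0: i=1,\ldots,m\}$ be an inequality set in $\mathbf{x}=(x_1,\ldots,x_n)$ and fix the variable order $x_1\prec\cdots\prec x_n$. Then the reduced minimal characterization set of $S_f$ is unique: the equality part $\widetilde{E}$ is uniquely determined by $S_f$, and any two minimal characterization sets of $\{g\ge0: g\in R_f\}$ are trivially equivalent.
   Context: An inequality set is a finite set $S=\{f_i\ge 0: i=1,\ldots,m\}$ with each $f_i$ a nonzero homogeneous linear polynomial in $\mathbf{x}$ with real coefficients; its solutions are the points of $\mathbb{R}^n$ satisfying all inequalities; a subset of $S$ is an inequality set whose polynomials form a subset of $\{f_1,\ldots,f_m\}$. The equality $f_k=0$ is an implied equality of $S$ if $f_k(\mathbf{x})=0$ for every solution of $S$. Inequalities $f_1\ge0,\ldots,f_k\ge0$ imply $f\ge0$ if every $\mathbf{x}$ satisfying the former satisfies $f(\mathbf{x})\ge0$; an inequality of a set is redundant if implied by the other inequalities of the set. Two inequality sets are equivalent if they have the same solution set. A subset $S'$ of $S$ is a minimal characterization set of $S$ if $S'$ is equivalent to $S$ and contains no redundant inequality. Two inequalities $f\ge0$, $g\ge 0$ are trivially equivalent if $f=c\,g$ for some real $c>0$; two inequality sets are trivially equivalent if they have the same number of inequalities and each inequality of either set is trivially equivalent to some inequality of the other. For a finite system $E$ of homogeneous linear equations of rank $\tilde n$, its Gauss–Jordan reduced form (reduced row echelon form) w.r.t. $x_1\prec\cdots\prec x_n$ is the unique equivalent system $\{x_{k_i}-U_i=0: i=1,\ldots,\tilde n\}$, $k_1<\cdots<k_{\tilde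 n}$, each $U_i$ a real linear combination of non-pivot variables. Construction: let $I$ be the set of indices $k$ with $f_k=0$ an implied equality of $S_f$, $E=\{f_k=0:k\in I\}$, and $\widetilde E=\{x_{k_i}-U_i=0\}$ its Gauss–Jordan reduced form; let $R_f$ be the set of nonzero polynomials obtained from $f_j$, $j\notin I$, by substituting $U_i$ for $x_{k_i}$ for all $i$. A reduced minimal characterization set of $S_f$ is $\widetilde{E}\cup S_{r'}$, where $S_{r'}$ is a minimal characterization set of the inequality set $\{g\ge 0: g\in R_f\}$. *)

(* Defs.v *)
From HB Require Import structures.
From mathcomp Require Import all_boot all_order all_algebra.
From mathcomp Require Import finmap.
Set Implicit Arguments. Unset Strict Implicit. Unset Printing Implicit Defensive.
Import Order.TTheory GRing.Theory Num.Theory.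
Local Open Scope ring_scope.
Local Open Scope fset_scope.

(* A homogeneous linear polynomial f = sum_j c_j x_j in x = (x_1..x_n) is
   represented by its coefficient row vector c : 'rV[R]_n.  Points of R^n are
   row vectors x : 'rV[R]_n. *)
Definition lin_eval (R : realFieldType) (n : nat) (f x : 'rV[R]_n) : R :=
  \sum_(j < n) f 0 j * x 0 j.

Definition ineq_set (R : realFieldType) (n : nat) (S : {fset 'rV[R]_n}) : Prop :=
  forall f, f \in S -> f != 0.

Definition is_solution (R : realFieldType) (n : nat) (S : {fset 'rV[R]_n})
  (x : 'rV[R]_n) : Prop :=
  forall f, f \in S -> 0 <= lin_eval f x.

Definition implied_eq (R : realFieldType) (n : nat) (S : {fset 'rV[R]_n})
  (f : 'rV[R]_n) : Prop :=
  forall x, is_solution S x -> lin_eval f x = 0.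

Definition implies (R : realFieldType) (n : nat) (S : {fset 'rV[R]_n})
  (g : 'rV[R]_n) : Prop :=
  forall x, is_solution S x -> 0 <= lin_eval g x.

Definition redundant (R : realFieldType) (n : nat) (S : {fset 'rV[R]_n})
  (f : 'rV[R]_n) : Prop :=
  implies (S `\ f) f.

Definition equiv_sets (R : realFieldType) (n : nat) (S T : {fset 'rV[R]_n}) : Prop :=
  forall x, is_solution S x <-> is_solution T x.

Definition min_char_set (R : realFieldType) (n : nat) (S S' : {fset 'rV[R]_n}) : Prop :=
  [/\ S' `<=` S, equiv_sets S' S & forall f, f \in S' -> ~ redundant S' f].

Definition triv_equiv_ineq (R : realFieldType) (n : nat) (f g : 'rV[R]_n) : Prop :=
  exists2 c : R, 0 < c & f = c *: g.

Definition triv_equiv_sets (R : realFieldType) (n : nat) (S T : {fset 'rV[R]_n}) : Prop :=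
  [/\ #|` S| = #|` T|,
      forall f, f \in S -> exists2 g, g \in T & triv_equiv_ineq f g
    & forall g, g \in T -> exists2 f, f \in S & triv_equiv_ineq g f].

(* A Gauss-Jordan reduced system is a list G of pairs (k_i, r_i) where r_i is the
   coefficient vector of the equation x_{k_i} - U_i = 0.
   is_GJ_form E G: G is the Gauss--Jordan reduced form (reduced row echelon form,
   w.r.t. x_1 < ... < x_n) of the homogeneous linear system {e = 0 : e in E}:
   - G is equivalent to E (same solution set);
   - pivots are strictly increasing, k_1 < ... < k_r;
   - row r_i has coefficient 1 at its pivot k_i, coefficient 0 at every other
     pivot, and coefficient 0 at every variable preceding x_{k_i}
     (so U_i is a combination of non-pivot variables x_j, j > k_i). *)
Definition is_GJ_form (R : realFieldType) (n : nat) (E : {fset 'rV[R]_n})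
  (G : seq ('I_n * 'rV[R]_n)) : Prop :=
  [/\ (forall x : 'rV[R]_n,
          (forall e, e \in E -> lin_eval e x = 0) <->
          (forall p, p \in G -> lin_eval p.2 x = 0)),
      sorted ltn [seq nat_of_ord p.1 | p <- G]
    & forall p, p \in G ->
        [/\ p.2 0 p.1 = 1,
            (forall j : 'I_n, (j < p.1)%N -> p.2 0 j = 0)
          & (forall q, q \in G -> q.1 != p.1 -> p.2 0 q.1 = 0)]].

(* U_i as a linear form, from the row r_i = x_{k_i} - U_i *)
Definition GJ_U (R : realFieldType) (n : nat) (p : 'I_n * 'rV[R]_n) : 'rV[R]_n :=
  \row_j (if j == p.1 then 0 else - p.2 0 j).

(* substitute U_i for x_{k_i}, for all i, in the linear form g *)
Definition GJ_subst (R : realFieldType) (n : nat) (G : seq ('I_n * 'rV[R]_n))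
  (g : 'rV[R]_n) : 'rV[R]_n :=
  (\row_j (if j \in [seq p.1 | p <- G] then 0 else g 0 j))
  + \sum_(p <- G) g 0 p.1 *: GJ_U p.

(* R_f : the nonzero forms obtained from the f_j with f_j = 0 not an implied
   equality (i.e. f_j not in E) by the substitution above *)
Definition Rf (R : realFieldType) (n : nat) (S E : {fset 'rV[R]_n})
  (G : seq ('I_n * 'rV[R]_n)) : {fset 'rV[R]_n} :=
  [fset GJ_subst G g | g in S `\` E] `\ 0.

(* Main.v *)
Require Import Defs.
From HB Require Import structures.
From mathcomp Require Import all_boot all_order all_algebra.
From mathcomp Require Import finmap.
From mathcomp Require Import ring lra.
Set Implicit Arguments. Unset Strict Implicit. Unset Printing Implicit Defensive.
Import Order.TTheory GRing.Theory Num.Theory.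
Local Open Scope ring_scope.


Section Lin.
Variables (R : realFieldType) (n : nat).
Implicit Types (f g x y : 'rV[R]_n).

Lemma linD_r f x y : lin_eval f (x + y) = lin_eval f x + lin_eval f y.
Proof. rewrite /lin_eval -big_split /=; apply: eq_bigr => j _; rewrite mxE mulrDr. by []. Qed.
Lemma linZ_r f a x : lin_eval f (a *: x) = a * lin_eval f x.
Proof. rewrite /lin_eval mulr_sumr; apply: eq_bigr => j _; rewrite mxE; ring. Qed.
Lemma linD_l f g x : lin_eval (f + g) x = lin_eval f x + lin_eval g x.
Proof. rewrite /lin_eval -big_split /=; apply: eq_bigr => j _; rewrite mxE mulrDl. by []. Qed.
Lemma linZ_l f a x : lin_eval (a *: f) x = a * lin_eval f x.
Proof. rewrite /lin_eval mulr_sumr; apply: eq_bigr => j _; rewrite mxE; ring. Qed.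
Lemma linN_l f x : lin_eval (- f) x = - lin_eval f x.
Proof. by rewrite -scaleN1r linZ_l mulN1r. Qed.
Lemma linN_r f x : lin_eval f (- x) = - lin_eval f x.
Proof. by rewrite -scaleN1r linZ_r mulN1r. Qed.
Lemma linB_l f g x : lin_eval (f - g) x = lin_eval f x - lin_eval g x.
Proof. by rewrite linD_l linN_l. Qed.
Lemma linB_r f x y : lin_eval f (x - y) = lin_eval f x - lin_eval f y.
Proof. by rewrite linD_r linN_r. Qed.
Lemma lin0_l x : lin_eval 0 x = 0.
Proof. by rewrite /lin_eval big1 // => j _; rewrite mxE mul0r. Qed.
Lemma lin0_r f : lin_eval f 0 = 0.
Proof. by rewrite /lin_eval big1 // => j _; rewrite mxE mulr0. Qed.
Lemma lin_sum_l (I : Type) (r : seq I) (F : I -> 'rV[R]_n) x :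
  lin_eval (\sum_(i <- r) F i) x = \sum_(i <- r) lin_eval (F i) x.
Proof.
elim: r => [|a r IH]; first by rewrite !big_nil lin0_l.
by rewrite !big_cons linD_l IH.
Qed.
Lemma lin_sum_r (I : Type) (r : seq I) (F : I -> 'rV[R]_n) f :
  lin_eval f (\sum_(i <- r) F i) = \sum_(i <- r) lin_eval f (F i).
Proof.
elim: r => [|a r IH]; first by rewrite !big_nil lin0_r.
by rewrite !big_cons linD_r IH.
Qed.
Lemma lin_delta f (j : 'I_n) : lin_eval f (delta_mx 0 j) = f 0 j.
Proof.
rewrite /lin_eval (bigD1 j) //= big1 ?addr0; first by rewrite mxE !eqxx mulr1.
by move=> i /negbTE hij; rewrite mxE hij andbF mulr0.
Qed.
Lemma lin_ext f g : (forall x, lin_eval f x = lin_eval g x) -> f = g.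
Proof. by move=> h; apply/rowP => j; rewrite -!lin_delta h. Qed.

Lemma farkas1 f g : f != 0 -> (forall v, 0 <= lin_eval f v -> 0 <= lin_eval g v) ->
  exists2 c, 0 <= c & g = c *: f.
Proof.
move=> fn0 H.
have [j fj] : exists j, f 0 j != 0.
  apply/existsP; apply: contraR fn0; rewrite negb_exists => /forallP h.
  by apply/eqP/rowP => j; rewrite mxE; apply/eqP; move: (h j); rewrite negbK.
pose w := (f 0 j)^-1 *: (delta_mx 0 j : 'rV[R]_n).
have fw : lin_eval f w = 1 by rewrite linZ_r lin_delta mulVf.
exists (lin_eval g w); first by apply: H; rewrite fw.
apply: lin_ext => v; rewrite linZ_l.
set v' := v - lin_eval f v *: w.
have fv' : lin_eval f v' = 0 by rewrite linB_r linZ_r fw mulr1 subrr.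
have g1 : 0 <= lin_eval g v' by apply: H; rewrite fv'.
have g2 : 0 <= lin_eval g (- v') by apply: H; rewrite linN_r fv' oppr0.
rewrite linN_r oppr_ge0 in g2.
have : lin_eval g v' = 0 by apply/eqP; rewrite eq_le g1 g2.
rewrite /v' linB_r linZ_r => /eqP; rewrite subr_eq0 => /eqP ->; ring.
Qed.

Definition solG (G : seq ('I_n * 'rV[R]_n)) x := forall p, p \in G -> lin_eval p.2 x = 0.
Definition rowsG (G : seq ('I_n * 'rV[R]_n)) :=
  forall p, p \in G ->
        [/\ p.2 0 p.1 = 1,
            (forall j : 'I_n, (j < p.1)%N -> p.2 0 j = 0)
          & (forall q, q \in G -> q.1 != p.1 -> p.2 0 q.1 = 0)].

Lemma uniq_map_inj (T T' : eqType) (h : T -> T') (s : seq T) :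
  uniq (map h s) -> {in s &, forall a b, h a = h b -> a = b}.
Proof.
elim: s => [|c s IH] //= /andP [hc us] a b.
rewrite !inE => /orP [/eqP -> | ha] /orP [/eqP -> | hb] // E.
- by move: hc; rewrite E map_f.
- by move: hc; rewrite -E map_f.
- exact: IH.
Qed.

Lemma sorted_props (G : seq ('I_n * 'rV[R]_n)) :
  sorted ltn [seq nat_of_ord p.1 | p <- G] ->
  uniq G /\ {in G &, forall p q, p.1 = q.1 -> p = q}.
Proof.
move=> so; have u := sorted_uniq ltn_trans ltnn so.
split; first exact: map_uniq u.
move=> p q hp hq e.
exact: (@uniq_map_inj _ _ (fun p : 'I_n * 'rV[R]_n => nat_of_ord p.1) G u p q hp hq (congr1 _ e)).
Qed.

Lemma piv_delta G : rowsG G -> {in G &, forall p q, p.1 = q.1 -> p = q} ->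
  forall p q, p \in G -> q \in G -> p.2 0 q.1 = (q == p)%:R.
Proof.
move=> rG inj p q hp hq; have [e|ne] := eqVneq q p.
  by rewrite e; case: (rG p hp).
case: (rG p hp) => _ _ ->//; apply: contra_neq ne => e; exact: inj.
Qed.

Lemma sum_delta G (c : 'I_n * 'rV[R]_n -> R) p : uniq G -> p \in G ->
  \sum_(q <- G) c q * (q == p)%:R = c p.
Proof.
move=> u hp; rewrite (bigD1_seq p) //= eqxx mulr1 big1 ?addr0 //.
by move=> q /negbTE ->; rewrite mulr0.
Qed.

Lemma lemZ G : rowsG G -> uniq G -> {in G &, forall p q, p.1 = q.1 -> p = q} ->
  forall h : 'rV[R]_n, (forall p, p \in G -> h 0 p.1 = 0) ->
  (forall x, solG G x -> lin_eval h x = 0) -> h = 0.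
Proof.
move=> rG u inj h hpiv hsol; apply/rowP => j; rewrite mxE.
pose x := (delta_mx 0 j : 'rV[R]_n) - \sum_(q <- G) q.2 0 j *: (delta_mx 0 q.1 : 'rV[R]_n).
have : lin_eval h x = 0.
  apply: hsol => p hp; rewrite /x linB_r lin_sum_r lin_delta.
  under eq_bigr => q _ do rewrite linZ_r lin_delta.
  rewrite (eq_big_seq (fun q : 'I_n * 'rV[R]_n => q.2 0 j * (q == p)%:R)); last first.
    by move=> q hq; rewrite (piv_delta rG inj hp hq).
  by rewrite sum_delta // subrr.
rewrite /x linB_r lin_sum_r lin_delta big_seq big1 ?subr0 // => q hq.
by rewrite linZ_r lin_delta hpiv // mulr0.
Qed.

Lemma lemREP G : rowsG G -> uniq G -> {in G &, forall p q, p.1 = q.1 -> p = q} ->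
  forall h : 'rV[R]_n, (forall x, solG G x -> lin_eval h x = 0) ->
  h = \sum_(q <- G) h 0 q.1 *: q.2.
Proof.
move=> rG u inj h hsol; apply/eqP; rewrite -subr_eq0; apply/eqP.
apply: (lemZ rG u inj).
  move=> p hp; rewrite !mxE summxE.
  under eq_bigr => q _ do rewrite mxE.
  rewrite (eq_big_seq (fun q : 'I_n * 'rV[R]_n => h 0 q.1 * (p == q)%:R)); last first.
    by move=> q hq; rewrite (piv_delta rG inj hq hp).
  rewrite (bigD1_seq p) //= eqxx mulr1 big1 ?addr0 ?subrr //.
  by move=> q; rewrite eq_sym => /negbTE ->; rewrite mulr0.
move=> x hx; rewrite linB_l lin_sum_l hsol // big_seq big1 ?subrr // => q hq.
by rewrite linZ_l hx // mulr0.
Qed.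

Lemma pivots_sub G1 G2 : rowsG G1 -> rowsG G2 -> uniq G2 ->
  {in G2 &, forall p q, p.1 = q.1 -> p = q} ->
  (forall x, solG G2 x -> solG G1 x) ->
  forall p, p \in G1 -> exists2 q, q \in G2 & q.1 = p.1.
Proof.
move=> r1 r2 u2 inj2 hs p hp.
have E := lemREP r2 u2 inj2 (h := p.2) (fun x hx => hs x hx p hp).
case: (r1 p hp) => p1 p0 _.
have : p.2 0 p.1 = \sum_(q <- G2) p.2 0 q.1 * q.2 0 p.1.
  by rewrite {1}E summxE; apply: eq_bigr => q _; rewrite mxE.
rewrite p1 => Hs.
have [/hasP [q hq /eqP e] | /hasPn Hn] := boolP (has (fun q : 'I_n * 'rV[R]_n => q.1 == p.1) G2).
  by exists q.
exfalso; move: Hs; rewrite big_seq big1; first by move/eqP; rewrite oner_eq0.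
move=> q hq; case: (r2 q hq) => _ q0 _.
case: (ltngtP q.1 p.1) => c.
- by rewrite p0 // mul0r.
- by rewrite q0 // mulr0.
- by move: (Hn q hq); rewrite /= (_ : q.1 = p.1) ?eqxx //; apply/val_inj.
Qed.

Lemma in_sub G1 G2 : rowsG G1 -> rowsG G2 -> uniq G2 ->
  {in G2 &, forall p q, p.1 = q.1 -> p = q} ->
  (forall x, solG G2 x -> solG G1 x) ->
  (forall r, r \in G2 -> exists2 p', p' \in G1 & p'.1 = r.1) ->
  forall p, p \in G1 -> p \in G2.
Proof.
move=> r1 r2 u2 i2 hs a21 p hp.
have [q hq e] := pivots_sub r1 r2 u2 i2 hs hp.
have d0 : p.2 - q.2 = 0.
  apply: (lemZ r2 u2 i2).
    move=> r hr; rewrite !mxE.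
    have [->|ne] := eqVneq r q.
      rewrite {1}e; case: (r1 p hp) => -> _ _; case: (r2 q hq) => -> _ _; by rewrite subrr.
    have ne1 : r.1 != q.1 by apply: contra_neq ne; apply: i2.
    case: (r2 q hq) => _ _ ->; rewrite // subr0.
    have [p' hp' e'] := a21 r hr.
    case: (r1 p hp) => _ _; rewrite -e' => -> //.
    by rewrite e' -e.
  move=> x hx; rewrite linB_l (hs x hx p hp) hx // subrr.
  by [].
move/eqP: d0; rewrite subr_eq0 => /eqP e2.
by move: e e2 hq; case: p {hp} => a b; case: q => c d /= -> ->.
Qed.

Lemma GJ_uniq G1 G2 : rowsG G1 -> rowsG G2 ->
  sorted ltn [seq nat_of_ord p.1 | p <- G1] ->
  sorted ltn [seq nat_of_ord p.1 | p <- G2] ->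
  (forall x, solG G1 x <-> solG G2 x) -> G1 = G2.
Proof.
move=> r1 r2 s1 s2 hs.
have [u1 i1] := sorted_props s1; have [u2 i2] := sorted_props s2.
have a12 := pivots_sub r1 r2 u2 i2 (fun x => proj2 (hs x)).
have a21 := pivots_sub r2 r1 u1 i1 (fun x => proj1 (hs x)).
apply: (@irr_sorted_eq _ (relpre (fun p : 'I_n * 'rV[R]_n => nat_of_ord p.1) ltn)).
- by move=> a b c /= h1 h2; apply: ltn_trans h1 h2.
- by move=> a /=; rewrite ltnn.
- by rewrite -sorted_map.
- by rewrite -sorted_map.
move=> p; apply/idP/idP.
  exact: (in_sub r1 r2 u2 i2 (fun x => proj2 (hs x)) a21).
exact: (in_sub r2 r1 u1 i1 (fun x => proj1 (hs x)) a12).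
Qed.
End Lin.

From Stdlib Require Import Classical.
Local Open Scope fset_scope.
Local Open Scope ring_scope.

Lemma card_le (T' : eqType) (P : T' -> T' -> Prop) (s1 s2 : seq T') :
  uniq s1 -> uniq s2 -> (forall x, x \in s1 -> exists2 y, y \in s2 & P x y) ->
  (forall x1 x2 y, x1 \in s1 -> x2 \in s1 -> P x1 y -> P x2 y -> x1 = x2) ->
  (size s1 <= size s2)%N.
Proof.
elim: s1 s2 => [|a s1 IH] s2 //= /andP [ha u1] u2 H inj.
have [y hy Pay] := H a (mem_head _ _).
have s2p : (0 < size s2)%N by move: hy; case: (s2).
suff Hle : (size s1 <= size (rem y s2))%N by rewrite size_rem // in Hle; rewrite -(prednK s2p) ltnS.
apply: IH u1 (rem_uniq y u2) _ _.
  move=> x hx; have hx' : x \in a :: s1 by rewrite inE hx orbT.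
  have [y' hy' Pxy'] := H x hx'.
  exists y' => //; rewrite (mem_rem_uniq _ u2) inE /= hy' andbT.
  apply/negP => /eqP e; subst y'.
  have := inj _ _ _ (mem_head a s1) hx' Pay Pxy'.
  by move=> e; move: ha; rewrite e hx.
by move=> x1 x2 y' h1 h2; apply: inj; rewrite inE ?h1 ?h2 orbT.
Qed.

Section Part2.
Variables (R : realFieldType) (n : nat).
Local Notation V := ('rV[R]_n).
Implicit Types (f g h x y z : V).

Lemma sol_add (S : {fset V}) x y : is_solution S x -> is_solution S y -> is_solution S (x + y).
Proof. by move=> hx hy f hf; rewrite linD_r addr_ge0 // ?hx ?hy. Qed.

Lemma sol0 (S : {fset V}) : is_solution S 0.
Proof. by move=> f _; rewrite lin0_r. Qed.

Lemma interior (S : {fset V}) (l : seq V) : {subset l <= S} ->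
  (forall f, f \in l -> exists x, is_solution S x /\ 0 < lin_eval f x) ->
  exists x, is_solution S x /\ forall f, f \in l -> 0 < lin_eval f x.
Proof.
elim: l => [|a l IH] sub H; first by exists 0; split; [exact: sol0|].
have [x [hx hlx]] : exists x, is_solution S x /\ forall f, f \in l -> 0 < lin_eval f x.
  by apply: IH => f hf; [apply: sub | apply: H]; rewrite inE hf orbT.
have [y [hy hay]] := H a (mem_head _ _).
exists (x + y); split; first exact: sol_add.
move=> f; rewrite inE => /orP [/eqP ->|hf].
  by rewrite linD_r ltr_wpDl // hx // sub // mem_head.
by rewrite linD_r ltr_wpDr ?hlx // hy // sub // inE hf orbT.
Qed.

Lemma small_step (l : seq V) z v : (forall h, h \in l -> 0 < lin_eval h z) ->
  exists2 d, 0 < d & forall h, h \in l -> d * `|lin_eval h v| <= lin_eval h z.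
Proof.
elim: l => [|a l IH] H; first by exists 1.
have [d' d'0 Hd'] : exists2 d, 0 < d & forall h, h \in l -> d * `|lin_eval h v| <= lin_eval h z.
  by apply: IH => h hh; apply: H; rewrite inE hh orbT.
have az : 0 < lin_eval a z by apply: H; rewrite mem_head.
set k := `|lin_eval a v| + 1.
have k0 : 0 < k by rewrite /k ltr_wpDl.
set e := lin_eval a z / k.
have e0 : 0 < e by rewrite /e divr_gt0.
have ek : e * k = lin_eval a z by rewrite /e divfK // gt_eqF.
have kv : `|lin_eval a v| <= k by rewrite /k lerDl.
have nv : forall h, 0 <= `|lin_eval h v| by move=> h; exact: normr_ge0.
case: (leP d' e) => c.
  exists d' => // h; rewrite inE => /orP [/eqP ->|hh]; last exact: Hd'.
  have := nv a; nra.
exists e => // h; rewrite inE => /orP [/eqP ->|hh].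
  have := nv a; nra.
have := Hd' h hh; have := nv h; nra.
Qed.

Lemma small_step' (l : seq V) z v : (forall h, h \in l -> 0 < lin_eval h z) ->
  exists2 d, 0 < d & forall h, h \in l -> 0 <= lin_eval h (z + d *: v).
Proof.
move=> H; have [d d0 Hd] := small_step v H; exists d => // h hh.
rewrite linD_r linZ_r; have := Hd h hh.
have hn := ler_norm (- lin_eval h v); rewrite normrN in hn.
nra.
Qed.

Lemma facet_match (T S1 S2 : {fset V}) xs :
  (forall g, g \in T -> g != 0) -> (forall g, g \in T -> 0 < lin_eval g xs) ->
  min_char_set T S1 -> min_char_set T S2 ->
  forall f, f \in S1 -> exists2 g, g \in S2 & triv_equiv_ineq f g.
Proof.
move=> nz pos [sub1 eq1 irr1] [sub2 eq2 irr2] f hf.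
have fT : f \in T by apply: (fsubsetP sub1).
have fxs := pos f fT.
have [y [hy fy]] : exists y, is_solution (S1 `\ f) y /\ lin_eval f y < 0.
  apply: NNPP => Hn; apply: (irr1 f hf) => y hy.
  rewrite leNgt; apply/negP => fy; apply: Hn; by exists y.
pose z := lin_eval f xs *: y - lin_eval f y *: xs.
have fz : lin_eval f z = 0 by rewrite /z linB_r !linZ_r mulrC subrr.
have hz : forall h, h \in S1 `\ f -> 0 < lin_eval h z.
  move=> h hh; have hT : h \in T by apply: (fsubsetP sub1); move: hh; rewrite in_fsetD1 => /andP [].
  have := hy h hh; have := pos h hT.
  rewrite /z linB_r !linZ_r; nra.
have zS1 : is_solution S1 z.
  move=> h hh; have [->|ne] := eqVneq h f; first by rewrite fz.
  by apply/ltW/hz; rewrite in_fsetD1 ne hh.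
have S12 : forall x, is_solution S1 x -> is_solution S2 x.
  by move=> x /eq1 /eq2.
have S21 : forall x, is_solution S2 x -> is_solution S1 x.
  by move=> x /eq2 /eq1.
have [g hg gz] : exists2 g, g \in S2 & lin_eval g z = 0.
  apply: NNPP => Hn.
  have pz : forall g, g \in enum_fset S2 -> 0 < lin_eval g z.
    move=> g hg; rewrite lt_def (S12 _ zS1 g hg) andbT.
    by apply/negP => /eqP e; apply: Hn; exists g.
  have [d d0 Hd] := small_step' y pz.
  have := S21 _ Hd f hf; rewrite linD_r fz linZ_r add0r; nra.
have gT : g \in T by apply: (fsubsetP sub2).
have fv : forall v, 0 <= lin_eval f v -> 0 <= lin_eval g v.
  move=> v fv.
  have pz : forall h, h \in enum_fset (S1 `\ f) -> 0 < lin_eval h z by move=> h; exact: hz.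
  have [d d0 Hd] := small_step' v pz.
  have zS : is_solution S1 (z + d *: v).
    move=> h hh; have [->|ne] := eqVneq h f.
      by rewrite linD_r fz linZ_r add0r mulr_ge0 // ltW.
    by apply: Hd; rewrite in_fsetD1 ne hh.
  have := S12 _ zS g hg; rewrite linD_r gz linZ_r add0r; nra.
have [c c0 gc] := farkas1 (nz f fT) fv.
have cpos : 0 < c.
  rewrite lt_def c0 andbT; apply/negP => /eqP e; move: (nz g gT).
  by rewrite gc e scale0r eqxx.
exists g => //; exists c^-1; first by rewrite invr_gt0.
by rewrite gc scalerA mulVf ?scale1r // gt_eqF.
Qed.

Lemma triv_inj (T S1 : {fset V}) : (forall g, g \in T -> g != 0) -> min_char_set T S1 ->
  forall f1 f2 g, f1 \in S1 -> f2 \in S1 -> triv_equiv_ineq f1 g -> triv_equiv_ineq f2 g -> f1 = f2.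
Proof.
move=> nz [sub1 _ irr1] f1 f2 g h1 h2 [c1 c10 e1] [c2 c20 e2].
apply: NNPP => ne; apply: (irr1 f1 h1) => x hx.
have : 0 <= lin_eval f2 x by apply: hx; rewrite in_fsetD1 h2 andbT eq_sym; apply/eqP.
rewrite e1 e2 !linZ_l => h.
have : 0 <= lin_eval g x.
  rewrite leNgt; apply/negP => hg; move: h; rewrite leNgt; apply/negP/negPn.
  by rewrite pmulr_rlt0.
move=> hg; exact: mulr_ge0 (ltW c10) hg.
Qed.

End Part2.

Section Part3.
Variables (R : realFieldType) (n : nat).
Local Notation V := ('rV[R]_n).

Lemma lin_delta_l (x : V) (k : 'I_n) : lin_eval (delta_mx 0 k) x = x 0 k.
Proof.
rewrite /lin_eval (bigD1 k) //= big1 ?addr0; first by rewrite mxE !eqxx mul1r.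
by move=> i /negbTE hij; rewrite mxE hij andbF mul0r.
Qed.

Lemma subst_eval (G : seq ('I_n * V)) (g x : V) : rowsG G ->
  uniq [seq p.1 | p <- G] -> solG G x ->
  lin_eval (GJ_subst G g) x = lin_eval g x.
Proof.
move=> rG u hx.
rewrite /GJ_subst linD_l lin_sum_l.
rewrite (eq_big_seq (fun p : 'I_n * V => g 0 p.1 * x 0 p.1)); last first.
  move=> p hp; rewrite linZ_l; congr (_ * _).
  have -> : GJ_U p = delta_mx 0 p.1 - p.2.
    apply/rowP => j; rewrite !mxE eqxx /=.
    have [->|_] := eqVneq j p.1; last by rewrite sub0r.
    by case: (rG p hp) => ->; rewrite subrr.
  by rewrite linB_l lin_delta_l hx // subr0.
rewrite [in RHS]/lin_eval /lin_eval.
rewrite -(big_map (fun p : 'I_n * V => p.1) xpredT (fun j => g 0 j * x 0 j)).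
rewrite [X in _ + X]big_uniq //= [X in _ + X]big_mkcond /= -big_split /=.
apply: eq_bigr => j _; rewrite mxE.
by case: (j \in _); rewrite ?mul0r ?add0r ?addr0.
Qed.
End Part3.

Unset Implicit Arguments.
Local Open Scope ring_scope.
Local Open Scope fset_scope.

Theorem theorem6 (R : realFieldType) (n : nat) (S E : {fset 'rV[R]_n}) :
  ineq_set S ->
  (forall f, f \in E <-> f \in S /\ implied_eq S f) ->
  forall G1 G2 : seq ('I_n * 'rV[R]_n),
    is_GJ_form E G1 -> is_GJ_form E G2 ->
  forall S1 S2 : {fset 'rV[R]_n},
    min_char_set (Rf S E G1) S1 -> min_char_set (Rf S E G2) S2 ->
  G1 = G2 /\ triv_equiv_sets S1 S2.
Proof.
move=> hS hE G1 G2 [e1 s1 r1] [e2 s2 r2] S1 S2 m1 m2.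
have G12 : G1 = G2.
  apply: (GJ_uniq r1 r2 s1 s2) => x; split.
    by move=> h; apply/(e2 x)/(e1 x).
  by move=> h; apply/(e1 x)/(e2 x).
split=> //; subst G2.
set T := Rf S E G1 in m1 m2.
have [xs [hxs pxs]] : exists x, is_solution S x /\
    forall f, f \in enum_fset (S `\` E) -> 0 < lin_eval f x.
  apply: interior.
    by move=> f; rewrite in_fsetD => /andP [].
  move=> f; rewrite in_fsetD => /andP [fE fS].
  apply: NNPP => Hn; move/negP: fE; apply; apply/(hE f); split => // x hx.
  apply/eqP; rewrite eq_le (hx f fS) andbT leNgt; apply/negP => h.
  by apply: Hn; exists x.
have solE : solG G1 xs.
  apply/(e1 xs) => e he; have [eS ie] := proj1 (hE e) he.
  exact: ie.
have u1 : uniq [seq p.1 | p <- G1].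
  by apply: (@map_uniq _ _ (fun i : 'I_n => nat_of_ord i)); rewrite -map_comp; apply: (sorted_uniq ltn_trans ltnn).
have nzT : forall g, g \in T -> g != 0.
  by move=> g; rewrite in_fsetD1 => /andP [].
have posT : forall g, g \in T -> 0 < lin_eval g xs.
  move=> g; rewrite in_fsetD1 => /andP [_ /imfsetP [f hf ->]].
  by rewrite subst_eval // pxs.
have M12 := facet_match nzT posT m1 m2.
have M21 := facet_match nzT posT m2 m1.
split=> //.
apply/eqP; rewrite eqn_leq; apply/andP; split.
  apply: (card_le (P := @triv_equiv_ineq R n)) => //; try exact: fset_uniq.
  by move=> x1 x2 y h1 h2; apply: (triv_inj nzT m1).
apply: (card_le (P := @triv_equiv_ineq R n)) => //; try exact: fset_uniq.
by move=> x1 x2 y h1 h2; apply: (triv_inj nzT m2).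
Qed.
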